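(* Let $\Gamma,\Gamma'$ be graphs. The assignment $\Phi\mapsto(s(\Phi),t(\Phi))$ is a bijection between graph morphisms $\Phi:\Gamma\to\Gamma'$ and pairs $(\phi_L,\phi_R)$ of morphisms of $\mathrm{Agg}$, $\phi_L:\mathrm{agg}(\Gamma)\to\mathrm{agg}(\Gamma')$ and $\phi_R:\Gamma/\Gamma\to\Gamma'/\Gamma'$, satisfying $\phi_R\circ\mathrm v_\Gamma=\mathrm v_{\Gamma'}\circ\phi_L$. (In particular, for every $\Phi$ the square with sides $s(\Phi),t(\Phi),\mathrm v_\Gamma,\mathrm v_{\Gamma'}$ commutes.)
   Context: A graph $\Gamma=(F,V,\partial,\imath)$ consists of finite sets $F$ (flags) and $V$ (vertices), a map $\partial:F\to V$ and an involution $\imath$ of $F$. The two-element orbits of $\imath$ are the edges, the fixed points the outer flags. A graph morphism $\phi:\Gamma\to\Gamma'=(F',V',\partial',\imath')$ is a triple $(\phi_V,\phi^F,\imath_\phi)$ with $\phi_V:V\to V'$ surjective, $\phi^F:F'\to F$ injective and $\imath_\phi$ a fixed-point-free involution of $F\setminus\phi^F(F')$, such that: (i) $\phi_V\partial\phi^F=\partial'$ and $\phi_V\partial(f)=\phi_V\partial(\imath_\phi f)$ for $f\notin\phi^F(F')$; (ii) for $f\notin\phi^F(F')$, either $\{f,\imath f\}$ is an edge of $\Gamma$ and $\imath_\phi f=\imath f$, or $f$ and $\imath_\phi f$ are both outer flags of $\Gamma$; (iii) if $f'\in F'$ and $\phi^F(f')$ lies on an edge of $\Gamma$, then $\imath(\phi^F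 f')=\phi^F(\imath' f')$. Composition: $(\psi\phi)_V=\psi_V\phi_V$, $(\psi\phi)^F=\phi^F\psi^F$, $\imath_{\psi\phi}$ equals $\imath_\phi$ off $\phi^F(F')$ and $\phi^F\imath_\psi(\phi^F)^{-1}$ on $\phi^F(F'\setminus\psi^F(F''))$. An aggregate is a graph with $\imath=\mathrm{id}$; $\mathrm{Agg}$ is the full subcategory of aggregates. For a graph $\Gamma$: the total dissection is $\mathrm{agg}(\Gamma)=(F,V,\partial,\mathrm{id})$; the total contraction $\Gamma/\Gamma$ is the aggregate whose vertices are the connected components of $\Gamma$ and whose flags are the outer flags of $\Gamma$, each attached to its component. $\mathrm v_\Gamma:\mathrm{agg}(\Gamma)\to\Gamma/\Gamma$ is the morphism (component map $V\to\pi_0(\Gamma)$, inclusion of outer flags into $F$, involution $\imath$ on the inner flags), i.e. grafting of all edges followed by contraction of all edges. For $\Phi:\Gamma\to\Gamma'$: $s(\Phi):\mathrm{agg}(\Gamma)\to\mathrm{agg}(\Gamma')$ is the triple $(\Phi_V,\Phi^F,\imath_\Phi)$. $t(\Phi):\Gamma/\Gamma\to\Gamma'/\Gamma'$ has vertex map induced by $\Phi_V$ on connected components, flag map the restriction of $\Phi^F$ to the outer flags of $\Gamma'$, and involution on the remaining outer flags $f$ of $\Gamma$ given by $\imath_\Phi(f)$ if $f\notin\Phi^F(F')$ and by $\Phi^F(\imath'((\Phi^F)^{-1}f))$ if $f=\Phi^F(f')$ with $f'$ an inner flag of $\Gamma'$. *)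

(* Defs.v *)
From mathcomp Require Import all_boot.
Set Implicit Arguments.
Unset Strict Implicit.
Unset Printing Implicit Defensive.

Record graph := Graph {
  flag : finType;
  vert : finType;
  bd : flag -> vert;
  inv : flag -> flag;
  inv_invol : involutive inv }.
Arguments bd : clear implicits.
Arguments inv : clear implicits.

(* Data of a (candidate) graph morphism Γ -> Γ': (φ_V, φ^F, ı_φ).
   ı_φ is only meaningful off the image of φ^F; we normalise it to be the
   identity on the image of φ^F (see is_mor), so that each morphism has a
   unique representation. *)
Record mdata (G G' : graph) := MData {
  mV : {ffun vert G -> vert G'};
  mF : {ffun flag G' -> flag G};
  mI : {ffun flag G -> flag G} }.

Definition is_mor (G G' : graph) (m : mdata G G') : Prop :=
  (forall v' : vert G', exists v, mV m v = v') /\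
  injective (mF m) /\
  (forall f', mI m (mF m f') = mF m f') /\
  (forall f, f \notin codom (mF m) ->
     [/\ mI m f \notin codom (mF m), mI m f != f & mI m (mI m f) = f]) /\
  (forall f', mV m (bd G (mF m f')) = bd G' f') /\
  (forall f, f \notin codom (mF m) -> mV m (bd G f) = mV m (bd G (mI m f))) /\
  (forall f, f \notin codom (mF m) ->
     (inv G f != f /\ mI m f = inv G f) \/
     (inv G f = f /\ inv G (mI m f) = mI m f)) /\
  (forall f', inv G (mF m f') != mF m f' ->
     inv G (mF m f') = mF m (inv G' f')).

Definition mcomp (G1 G2 G3 : graph) (psi : mdata G2 G3) (phi : mdata G1 G2)
  : mdata G1 G3 :=
  MData [ffun v => mV psi (mV phi v)]
        [ffun f'' => mF phi (mF psi f'')]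
        [ffun f => match [pick f' | mF phi f' == f] with
                    | Some f' => mF phi (mI psi f')
                    | None => mI phi f
                    end].

Definition agg (G : graph) : graph :=
  @Graph (flag G) (vert G) (bd G) id (fun _ => erefl).

Definition adj (G : graph) : rel (vert G) :=
  fun v w => [exists f, (bd G f == v) && (bd G (inv G f) == w)].

Definition comp_set (G : graph) (v : vert G) : {set vert G} :=
  [set w | connect (@adj G) v w].

Definition compT (G : graph) : finType :=
  {C : {set vert G} | [exists v, C == comp_set v]}.

Definition comp_of (G : graph) (v : vert G) : compT G :=
  exist _ (comp_set v)
    (introT (@existsP _ (fun w => comp_set v == comp_set w))
            (ex_intro _ v (eqxx _))).

Definition rep (G : graph) (C : compT G) : vert G :=
  xchoose (elimT existsP (valP C)).

Definition outerT (G : graph) : finType := {f : flag G | inv G f == f}.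

Definition quot (G : graph) : graph :=
  @Graph (outerT G) (compT G) (fun f => comp_of (bd G (val f))) id
         (fun _ => erefl).

Definition vmor (G : graph) : mdata (agg G) (quot G) :=
  @MData (agg G) (quot G) [ffun v : vert G => @comp_of G v]
         [ffun f : outerT G => val f]
         [ffun f : flag G => inv G f].

Definition s_map (G G' : graph) (Phi : mdata G G') : mdata (agg G) (agg G') :=
  @MData (agg G) (agg G') (mV Phi) (mF Phi) (mI Phi).

Definition lift_sub (A T : finType) (P : pred T) (h : A -> T)
  : option {ffun A -> {x : T | P x}} :=
  (if [forall a, P (h a)] as b return [forall a, P (h a)] = b -> _
   then fun E => Some [ffun a => exist (fun x => P x) (h a)
                                   (elimT (@forallP _ (fun a => P (h a))) E a)]
   else fun _ => None) erefl.

(* t(Φ), defined (Some) when its flag map and involution land in outer flags,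
   which is the case for every morphism Φ. *)
Definition t_inv (G G' : graph) (Phi : mdata G G') (f : outerT G) : flag G :=
  if [pick f' : outerT G' | mF Phi (val f') == val f] is Some _ then val f
  else if [pick f' : flag G' | mF Phi f' == val f] is Some f'
       then mF Phi (inv G' f')
       else mI Phi (val f).

Definition t_map (G G' : graph) (Phi : mdata G G')
  : option (mdata (quot G) (quot G')) :=
  match lift_sub (fun f => inv G f == f) (fun f' : outerT G' => mF Phi (val f')),
        lift_sub (fun f => inv G f == f) (t_inv Phi) with
  | Some tF, Some tI =>
      Some (@MData (quot G) (quot G') [ffun C => comp_of (mV Phi (rep C))] tF tI)
  | _, _ => None
  end.

(* Main.v *)
Require Import Defs.
From mathcomp Require Import all_boot.
Set Implicit Arguments. Unset Strict Implicit. Unset Printing Implicit Defensive.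

Lemma lift_subP (A T : finType) (P : pred T) (h : A -> T) :
  (forall a, P (h a)) -> exists g, lift_sub P h = Some g /\ forall a, val (g a) = h a.
Proof.
move=> H; rewrite /lift_sub.
generalize (@erefl bool [forall a, P (h a)]).
have E : [forall a, P (h a)] = true by apply/forallP.
move=> e. move: e. rewrite {2 3}E => e.
by eexists; split; first reflexivity; move=> a; rewrite ffunE.
Qed.

Section Conn.
Variable G : graph.
Lemma adjC : symmetric (@adj G).
Proof.
move=> v w; apply/existsP/existsP => -[f /andP[/eqP <- /eqP <-]];
  by exists (Defs.inv G f); rewrite inv_invol !eqxx.
Qed.
Lemma csym : connect_sym (@adj G). Proof. exact: sym_connect_sym adjC. Qed.
Lemma comp_of_eq (v w : vert G) : connect (@adj G) v w -> comp_of v = comp_of w.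
Proof.
move=> H; apply: val_inj => /=; apply/setP => x; rewrite !inE.
exact: (same_connect (@csym) H x).
Qed.
Lemma comp_of_conn (v w : vert G) : comp_of v = comp_of w -> connect (@adj G) v w.
Proof. by move/(congr1 val)/setP/(_ w); rewrite /= !inE connect0 => ->. Qed.
Lemma rep_comp (C : compT G) : comp_of (rep C) = C.
Proof.
apply: val_inj => /=; rewrite /rep.
by move/eqP: (xchooseP (elimT existsP (valP C))) => <-.
Qed.
Lemma rep_conn (v : vert G) : connect (@adj G) (rep (comp_of v)) v.
Proof. apply: comp_of_conn; exact: rep_comp. Qed.
End Conn.

Lemma hom_conn (G G' : graph) (h : vert G -> vert G') :
  (forall v w, adj v w -> connect (@adj G') (h v) (h w)) ->
  forall v w, connect (@adj G) v w -> connect (@adj G') (h v) (h w).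
Proof.
move=> Hh v w /connectP[p]; elim: p v => [|x p IH] v /=; first by move=> _ ->.
case/andP=> Hvx Hp Hw; exact: connect_trans (Hh _ _ Hvx) (IH _ Hp Hw).
Qed.

Lemma notcodomP (A B : finType) (h : A -> B) y : (forall x, h x != y) -> y \notin codom h.
Proof. move=> H; apply/negP => /codomP[x Hx]; by move: (H x); rewrite -Hx eqxx. Qed.

Section Part1.
Variables (G G' : graph) (Phi : mdata G G').
Hypothesis Hsurj : forall v', exists v, mV Phi v = v'.
Hypothesis Hinj : injective (mF Phi).
Hypothesis Hnorm : forall f', mI Phi (mF Phi f') = mF Phi f'.
Hypothesis Hfp : forall f, f \notin codom (mF Phi) ->
     [/\ mI Phi f \notin codom (mF Phi), mI Phi f != f & mI Phi (mI Phi f) = f].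
Hypothesis Hbd1 : forall f', mV Phi (bd G (mF Phi f')) = bd G' f'.
Hypothesis Hbd2 : forall f, f \notin codom (mF Phi) ->
  mV Phi (bd G f) = mV Phi (bd G (mI Phi f)).
Hypothesis Hii : forall f, f \notin codom (mF Phi) ->
     (Defs.inv G f != f /\ mI Phi f = Defs.inv G f) \/
     (Defs.inv G f = f /\ Defs.inv G (mI Phi f) = mI Phi f).
Hypothesis Hiii : forall f', Defs.inv G (mF Phi f') != mF Phi f' ->
     Defs.inv G (mF Phi f') = mF Phi (Defs.inv G' f').

Lemma outer_mF f' : Defs.inv G' f' = f' -> Defs.inv G (mF Phi f') = mF Phi f'.
Proof.
move=> E; have [//|H] := eqVneq (Defs.inv G (mF Phi f')) (mF Phi f').
by have := Hiii H; rewrite E => Heq; rewrite Heq eqxx in H.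
Qed.

Lemma outer_inv f' : Defs.inv G (mF Phi f') = mF Phi f' -> Defs.inv G' f' != f' ->
  Defs.inv G (mF Phi (Defs.inv G' f')) = mF Phi (Defs.inv G' f').
Proof.
move=> E Hn; have [//|H] := eqVneq (Defs.inv G (mF Phi (Defs.inv G' f'))) (mF Phi (Defs.inv G' f')).
have := Hiii H; rewrite inv_invol => H2.
have : mF Phi (Defs.inv G' f') = Defs.inv G (mF Phi f') by rewrite -H2 inv_invol.
by rewrite E => /Hinj Hf; rewrite Hf eqxx in Hn.
Qed.

Lemma conn_adj v w : adj v w -> connect (@adj G') (mV Phi v) (mV Phi w).
Proof.
case/existsP => f /andP[/eqP <- /eqP <-].
have [E|Hn] := eqVneq (Defs.inv G f) f; first by rewrite E connect0.
case: (boolP (f \in codom (mF Phi))) => [/codomP[f' Ef]|Hc].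
  subst f; rewrite (Hiii Hn) !Hbd1; apply: connect1; apply/existsP; exists f'.
  by rewrite !eqxx.
case: (Hii Hc) => [[_ E]|[E _]]; first by rewrite (Hbd2 Hc) E connect0.
by rewrite E eqxx in Hn.
Qed.

Lemma key v : comp_of (mV Phi (rep (comp_of v))) = comp_of (mV Phi v).
Proof. apply: comp_of_eq; apply: (hom_conn conn_adj); exact: rep_conn. Qed.

Lemma t_inv_a (f : outerT G) g : val f = mF Phi g -> Defs.inv G' g = g ->
  t_inv Phi f = val f.
Proof.
move=> Ef Eg; rewrite /t_inv; case: pickP => [//|Hn].
by move: (Hn (exist _ g (introT eqP Eg))); rewrite /= Ef eqxx.
Qed.

Lemma t_inv_b (f : outerT G) g : val f = mF Phi g -> Defs.inv G' g != g ->
  t_inv Phi f = mF Phi (Defs.inv G' g).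
Proof.
move=> Ef Eg; rewrite /t_inv; case: pickP => [a /eqP Ha|_].
  rewrite Ef in Ha; move: Eg; by rewrite -(Hinj Ha) (eqP (valP a)) eqxx.
case: pickP => [g' /eqP Hg'|Hn]; first by rewrite Ef in Hg'; rewrite (Hinj Hg').
by move: (Hn g); rewrite Ef eqxx.
Qed.

Lemma t_inv_c (f : outerT G) : val f \notin codom (mF Phi) -> t_inv Phi f = mI Phi (val f).
Proof.
move=> Hc; rewrite /t_inv; case: pickP => [a /eqP Ha|_]; first by rewrite -Ha codom_f in Hc.
case: pickP => [g /eqP Hg|//]; by rewrite -Hg codom_f in Hc.
Qed.

Lemma t_inv_outer (f : outerT G) : Defs.inv G (t_inv Phi f) == t_inv Phi f.
Proof.
case: (boolP (val f \in codom (mF Phi))) => [/codomP[g Eg]|Hc].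
  have [Eg'|Ng] := eqVneq (Defs.inv G' g) g.
    by rewrite (t_inv_a Eg Eg') (valP f).
  rewrite (t_inv_b Eg Ng); apply/eqP; apply: outer_inv Ng; rewrite -Eg; apply/eqP; exact: (valP f).
rewrite (t_inv_c Hc); case: (Hii Hc) => [[H _]|[_ ->//]].
by rewrite (eqP (valP f)) eqxx in H.
Qed.

Variables (g1 : {ffun outerT G' -> outerT G}) (g2 : {ffun outerT G -> outerT G}).
Hypothesis Hg1 : forall a, val (g1 a) = mF Phi (val a).
Hypothesis Hg2 : forall a, val (g2 a) = t_inv Phi a.

Let R : mdata (quot G) (quot G') :=
  @MData (quot G) (quot G') [ffun C => comp_of (mV Phi (rep C))] g1 g2.

Lemma notcodA (f : outerT G) g : f \notin codom g1 -> val f = mF Phi g ->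
  Defs.inv G' g != g.
Proof.
move=> Hf Eg; apply/negP => Hg; move/negP: Hf; apply; apply/codomP.
exists (exist _ g Hg); apply: val_inj; by rewrite Hg1 Eg.
Qed.

Lemma E2A (f : outerT G) g : val f = mF Phi g -> Defs.inv G' g != g ->
  val (g2 f) = mF Phi (Defs.inv G' g).
Proof. by move=> Eg Ng; rewrite Hg2 (t_inv_b Eg Ng). Qed.

Lemma E2B (f : outerT G) : val f \notin codom (mF Phi) -> val (g2 f) = mI Phi (val f).
Proof. by move=> Hc; rewrite Hg2 t_inv_c. Qed.

Lemma R_mor : is_mor R.
Proof.
split; [|split; [|split; [|split; [|split; [|split; [|split]]]]]].
- move=> C'; have [v Hv] := Hsurj (rep C'); exists (comp_of v).
  by rewrite /= ffunE key Hv rep_comp.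
- move=> a b /(congr1 val); rewrite /= !Hg1 => /Hinj; exact: val_inj.
- move=> a /=; apply: val_inj; rewrite Hg2 /t_inv; case: pickP => [//|Hn].
  by move: (Hn a); rewrite Hg1 eqxx.
- move=> f /= Hf; case: (boolP (val f \in codom (mF Phi))) => [/codomP[g Eg]|Hc].
    have Ng := notcodA Hf Eg; have E2f := E2A Eg Ng.
    split.
    + apply/negP => /codomP[a /(congr1 val)]; rewrite E2f Hg1 => /Hinj Ha.
      by move: Ng; rewrite -{2}[g]inv_invol Ha (eqP (valP a)) eqxx.
    + apply/negP => /eqP /(congr1 val); rewrite E2f Eg => /Hinj E.
      by rewrite E eqxx in Ng.
    + have N2 : Defs.inv G' (Defs.inv G' g) != Defs.inv G' g by rewrite inv_invol eq_sym.
      by apply: val_inj; rewrite (E2A E2f N2) inv_invol Eg.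
  have E2f := E2B Hc; have [H1 H2 H3] := Hfp Hc; split.
  + apply/negP => /codomP[a /(congr1 val)]; rewrite E2f Hg1 => Ha.
    by rewrite Ha codom_f in H1.
  + apply/negP => /eqP /(congr1 val); rewrite E2f => E; by rewrite E eqxx in H2.
  + apply: val_inj; rewrite E2B; first by rewrite E2f H3.
    by rewrite E2f.
- by move=> a /=; rewrite ffunE Hg1 key Hbd1.
- move=> f Hf /=; rewrite !ffunE !key; apply: comp_of_eq.
  case: (boolP (val f \in codom (mF Phi))) => [/codomP[g Eg]|Hc].
    have Ng := notcodA Hf Eg; rewrite (E2A Eg Ng) Eg !Hbd1.
    by apply: connect1; apply/existsP; exists g; rewrite !eqxx.
  by rewrite E2B // -(Hbd2 Hc).
- by move=> f _; right; split.
- by move=> f'; rewrite /= eqxx.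
Qed.

Lemma R_comm : mcomp R (vmor G) = mcomp (vmor G') (s_map Phi).
Proof.
congr MData; apply/ffunP => x; rewrite !ffunE /=.
all: try rewrite !ffunE /=.
- exact: key.
- exact: Hg1.
case: pickP => [a|Hn].
  rewrite ffunE => /eqP Ha; subst x; rewrite ffunE Hg2.
  case: pickP => [g /eqP Eg|Hn].
    rewrite ffunE; have [Eg'|Ng] := eqVneq (Defs.inv G' g) g.
      by rewrite (t_inv_a (esym Eg) Eg') Eg' Eg.
    by rewrite (t_inv_b (esym Eg) Ng).
  by rewrite t_inv_c //; apply: notcodomP => y; exact: negbT (Hn y).
have Nx : Defs.inv G x != x.
  by apply/negP => Hx; move: (Hn (exist _ x Hx)); rewrite ffunE eqxx.
case: pickP => [g /eqP Eg|Hn2].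
  by subst x; rewrite ffunE (Hiii Nx).
have Hc := notcodomP (fun y => negbT (Hn2 y)).
case: (Hii Hc) => [[_ ->]|[E _]] //; by rewrite E eqxx in Nx.
Qed.

End Part1.

Section Part2.
Variables (G G' : graph) (L : mdata (agg G) (agg G')) (R : mdata (quot G) (quot G')).
Hypothesis Hinj : injective (mF L).
Hypothesis H : mcomp R (vmor G) = mcomp (vmor G') L.

Definition PhiL : mdata G G' := @MData G G' (mV L) (mF L) (mI L).

Lemma HV v : mV R (@comp_of G v) = @comp_of G' (mV L v).
Proof. have := congr1 (@mV _ _) H; move/ffunP/(_ v); rewrite !ffunE /= ?ffunE //. Qed.

Lemma HF (a : outerT G') : val (mF R a) = mF L (val a).
Proof. have := congr1 (@mF _ _) H; move/ffunP/(_ a); rewrite !ffunE /= ?ffunE //. Qed.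

Lemma HIe (f : flag G) :
  match [pick f' : outerT G | val f' == f ] with
  | Some f' => val (mI R f')
  | None => Defs.inv G f
  end =
  match [pick f' | mF L f' == f ] with
  | Some f' => mF L (Defs.inv G' f')
  | None => mI L f
  end.
Proof.
have := congr1 (@mI _ _) H; move/ffunP/(_ f); rewrite !ffunE /=.
under eq_pick do rewrite ffunE.
case: pickP => [a _|_]; rewrite ?ffunE => ->; case: pickP => [b _|_]; rewrite ?ffunE //.
Qed.

Lemma D1 (f : flag G) : f \notin codom (mF L) -> Defs.inv G f != f -> mI L f = Defs.inv G f.
Proof.
move=> Hc Hn; have := HIe f.
case: pickP => [a /eqP Ha|_]; first by rewrite -Ha (eqP (valP a)) eqxx in Hn.
case: pickP => [g /eqP Hg|_]; first by rewrite -Hg codom_f in Hc.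
by move=> <-.
Qed.

Lemma D2 (f : flag G) : f \notin codom (mF L) -> Defs.inv G f = f ->
  Defs.inv G (mI L f) = mI L f.
Proof.
move=> Hc Hf; have := HIe f.
case: pickP => [a _|Hn]; last by move: (Hn (exist _ f (introT eqP Hf))); rewrite eqxx.
case: pickP => [g /eqP Hg|_]; first by rewrite -Hg codom_f in Hc.
move=> <-; apply/eqP; exact: (valP (mI R a)).
Qed.

Lemma D3 (g : flag G') : Defs.inv G (mF L g) != mF L g ->
  Defs.inv G (mF L g) = mF L (Defs.inv G' g).
Proof.
move=> Hn; have := HIe (mF L g).
case: pickP => [a /eqP Ha|_]; first by rewrite -Ha (eqP (valP a)) eqxx in Hn.
case: pickP => [g' /eqP /Hinj -> //|Hn2].
by move: (Hn2 g); rewrite eqxx.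
Qed.

Lemma D4 (a : outerT G) : val (mI R a) = t_inv PhiL a.
Proof.
have := HIe (val a).
case: pickP => [a' /eqP /val_inj ->|Hn]; last by move: (Hn a); rewrite eqxx.
move=> ->; rewrite /t_inv /=.
case: pickP => [g /eqP Hg|Hn2].
  case: pickP => [b /eqP Hb|_] //.
  by rewrite -Hb in Hg; rewrite (Hinj Hg) (eqP (valP b)).
case: pickP => [b /eqP Hb|_] //.
by move: (Hn2 (val b)); rewrite Hb eqxx.
Qed.

Lemma PhiL_mor : is_mor L -> is_mor PhiL.
Proof.
case=> H1 [H2 [H3 [H4 [H5 [H6 _]]]]].
split; [exact H1|split;[exact H2|split;[exact H3|split;[exact H4|split;[exact H5|split;[exact H6|split]]]]]].
- move=> f Hc /=; have [E|Ne] := eqVneq (Defs.inv G f) f.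
    by right; split => //; exact: D2.
  by left; split => //; exact: D1.
- move=> g /=; exact: D3.
Qed.

Lemma mdata_eta (A B : graph) (m : mdata A B) : m = MData (mV m) (mF m) (mI m).
Proof. by case: m. Qed.

Lemma PhiL_t : t_map PhiL = Some R.
Proof.
have O1 : forall a : outerT G', Defs.inv G (mF PhiL (val a)) == mF PhiL (val a).
  by move=> a; rewrite /= -HF; exact: (valP (mF R a)).
have O2 : forall a : outerT G, Defs.inv G (t_inv PhiL a) == t_inv PhiL a.
  by move=> a; rewrite -D4; exact: (valP (mI R a)).
have [g1 [E1 Hg1]] := @lift_subP _ _ (fun f => Defs.inv G f == f)
   (fun f' : outerT G' => mF PhiL (val f')) O1.
have [g2 [E2 Hg2]] := @lift_subP _ _ (fun f => Defs.inv G f == f) (t_inv PhiL) O2.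
rewrite /t_map E1 E2; congr Some; rewrite [RHS]mdata_eta; congr MData; apply/ffunP => x.
- by rewrite ffunE -{2}(rep_comp x) HV.
- by apply: val_inj; rewrite Hg1 HF.
- by apply: val_inj; rewrite Hg2 D4.
Qed.
End Part2.

Theorem proposition2p12 (G G' : graph) :
  (forall Phi : mdata G G', is_mor Phi ->
     exists2 R : mdata (quot G) (quot G'), t_map Phi = Some R &
       [/\ is_mor (s_map Phi), is_mor R &
           mcomp R (vmor G) = mcomp (vmor G') (s_map Phi)]) /\
  (forall (L : mdata (agg G) (agg G')) (R : mdata (quot G) (quot G')),
     is_mor L -> is_mor R -> mcomp R (vmor G) = mcomp (vmor G') L ->
     exists! Phi : mdata G G', [/\ is_mor Phi, s_map Phi = L & t_map Phi = Some R]).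
Proof.
split.
- move=> Phi HP; case: HP => Hsurj [Hinj [Hnorm [Hfp [Hbd1 [Hbd2 [Hii Hiii]]]]]].
  have O1 : forall a : outerT G', Defs.inv G (mF Phi (val a)) == mF Phi (val a).
    by move=> a; apply/eqP; apply: outer_mF => //; apply/eqP; exact: (valP a).
  have O2 : forall a : outerT G, Defs.inv G (t_inv Phi a) == t_inv Phi a.
    by move=> a; apply: t_inv_outer.
  have [g1 [E1 Hg1]] := @lift_subP _ _ (fun f => Defs.inv G f == f)
     (fun f' : outerT G' => mF Phi (val f')) O1.
  have [g2 [E2 Hg2]] := @lift_subP _ _ (fun f => Defs.inv G f == f) (t_inv Phi) O2.
  exists (@MData (quot G) (quot G') [ffun C => comp_of (mV Phi (rep C))] g1 g2).
    by rewrite /t_map E1 E2.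
  split.
  + split; [exact Hsurj|split;[exact Hinj|split;[exact Hnorm|split;[exact Hfp|split;[exact Hbd1|split;[exact Hbd2|split]]]]]].
    * by move=> f _; right; split.
    * by move=> f'; rewrite /= eqxx.
  + by apply: R_mor.
  + by apply: R_comm.
- move=> L R HL HR H.
  have Hinj : injective (mF L) by case: HL => _ [].
  exists (PhiL L); split; first split.
  + exact: (PhiL_mor Hinj H HL).
  + by rewrite [RHS]mdata_eta.
  + exact: (PhiL_t Hinj H).
  + by move=> Psi [_ <- _]; rewrite [RHS]mdata_eta.
Qed.
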